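(* Let $n\ge2$, $0<\alpha_1\le\dots\le\alpha_m$ with $\sum\alpha_j=1$, $(A,\tau)=(\mathbb{C}p_1\oplus\cdots\oplus\mathbb{C}p_m,\tau_1)*(\mathbb{M}_n,tr_n)$ the reduced free product with $\tau_1(p_j)=\alpha_j$, $\{e_{ij}\}$ matrix units of $\mathbb{M}_n$, $u=\sum_{i=1}^{n-1}e_{i,i+1}+e_{n,1}$, $B=C^*(\{u^kp_ju^{-k}:0\le k\le n-1,1\le j\le m\}\cup\{e_{11},\dots,e_{nn}\})$, and for an integer $l$ with $l\mid n$, $1<l<n$, $E=C^*(\{u^kp_ju^{-k}:0\le k\le l-1,1\le j\le m\}\cup\{e_{11},\dots,e_{nn}\}\cup\{u^l,u^{2l},\dots,u^{n-l}\})$. Then (1) for $b\in B$ and $0<k\le n-1$, $\tau(bu^k)=0$ and $\tau(u^kb)=0$; (2) for $e\in E$ and $0<k\le l-1$, $\tau(eu^k)=0$ and $\tau(u^ke)=0$.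
   Context: Reduced free product: the unique unital $C^*$-algebra with state generated by unital copies of the factors, restricting to the given traces, in which they are free, with faithful GNS representation; $\tau$ is a faithful trace. $tr_n$ is the normalized trace on $\mathbb{M}_n$. *)

(* Defs.v *)
From mathcomp Require Import all_boot all_algebra.
From mathcomp Require Import reals.
From mathcomp.real_closed Require Import complex.
Set Implicit Arguments. Unset Strict Implicit. Unset Printing Implicit Defensive.
Import GRing.Theory Num.Theory.
Local Open Scope ring_scope.

Definition is_Cstar_algebra (R : realType) (A : algType R[i])
    (st : A -> A) (nrm : A -> R) : Prop :=
  (forall a, st (st a) = a) /\
      (forall a b, st (a + b) = st a + st b) /\
      (forall (c : R[i]) a, st (c *: a) = c^* *: st a) /\
      (forall a b, st (a * b) = st b * st a) /\
      (forall a, nrm a = 0 -> a = 0) /\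
      (forall a b, nrm (a + b) <= nrm a + nrm b) /\
      (forall (c : R[i]) a, ((nrm (c *: a))%:C)%C = `|c| * ((nrm a)%:C)%C) /\
      (forall a b, nrm (a * b) <= nrm a * nrm b) /\
      (forall a, nrm (st a * a) = nrm a ^+ 2) /\
      (forall x : nat -> A,
        (forall e : R, 0 < e -> exists N, forall p q, (N <= p)%N -> (N <= q)%N ->
            nrm (x p - x q) < e) ->
        exists l, forall e : R, 0 < e -> exists N, forall p, (N <= p)%N ->
            nrm (x p - l) < e).

Inductive in_star_alg (R : realType) (A : algType R[i]) (st : A -> A)
    (S : A -> Prop) : A -> Prop :=
  | sa_gen a : S a -> in_star_alg st S a
  | sa_one : in_star_alg st S 1
  | sa_add a b : in_star_alg st S a -> in_star_alg st S b -> in_star_alg st S (a + b)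
  | sa_scale (c : R[i]) a : in_star_alg st S a -> in_star_alg st S (c *: a)
  | sa_mul a b : in_star_alg st S a -> in_star_alg st S b -> in_star_alg st S (a * b)
  | sa_star a : in_star_alg st S a -> in_star_alg st S (st a).

Definition in_Cstar_gen (R : realType) (A : algType R[i]) (st : A -> A)
    (nrm : A -> R) (S : A -> Prop) (a : A) : Prop :=
  forall e : R, 0 < e -> exists b, in_star_alg st S b /\ nrm (a - b) < e.

Definition is_state (R : realType) (A : algType R[i]) (st : A -> A)
    (tau : A -> R[i]) : Prop :=
  [/\ (forall (c : R[i]) a b, tau (c *: a + b) = c * tau a + tau b),
      tau 1 = 1 &
      (forall a, 0 <= tau (st a * a))].

Definition faithful_state (R : realType) (A : algType R[i]) (st : A -> A)
    (tau : A -> R[i]) : Prop :=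
  forall a, tau (st a * a) = 0 -> a = 0.

Definition free_pair (R : realType) (A : algType R[i]) (tau : A -> R[i])
    (A1 A2 : A -> Prop) : Prop :=
  forall s : seq (bool * A), s != [::] ->
    (forall x, x \in s -> (if x.1 then A1 x.2 else A2 x.2) /\ tau x.2 = 0) ->
    sorted (fun x y : bool * A => x.1 != y.1) s ->
    tau (\prod_(x <- s) x.2) = 0.

(* Image of C p_1 + ... + C p_m and of M_n (via matrix units e). *)
Definition span_proj (R : realType) (A : algType R[i]) (m : nat)
    (p : 'I_m -> A) (a : A) : Prop :=
  exists c : 'I_m -> R[i], a = \sum_j c j *: p j.

Definition span_mu (R : realType) (A : algType R[i]) (n : nat)
    (e : 'I_n -> 'I_n -> A) (a : A) : Prop :=
  exists c : 'I_n -> 'I_n -> R[i], a = \sum_i \sum_j c i j *: e i j.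

Definition is_reduced_free_product (R : realType) (A : algType R[i])
    (st : A -> A) (nrm : A -> R) (tau : A -> R[i]) (m n : nat)
    (alpha : 'I_m -> R) (p : 'I_m -> A) (e : 'I_n -> 'I_n -> A) : Prop :=
  is_Cstar_algebra st nrm /\
      is_state st tau /\
      faithful_state st tau /\
      ((forall j, st (p j) = p j) /\ (forall j k, p j * p k = if j == k then p j else 0)
        /\ \sum_j p j = 1) /\
      ((forall i j, st (e i j) = e j i) /\
        (forall i j k l, e i j * e k l = if j == k then e i l else 0)
        /\ \sum_i e i i = 1) /\
      ((forall j, tau (p j) = ((alpha j)%:C)%C) /\
        (forall i j, tau (e i j) = if i == j then (n%:R)^-1 else 0)) /\
      free_pair tau (span_proj p) (span_mu e) /\
      (forall a, in_Cstar_gen st nrm (fun x => (exists j, x = p j) \/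
                                              exists i j, x = e i j) a).

(* The cyclic shift u = sum_{i=1}^{n-1} e_{i,i+1} + e_{n,1} (0-indexed). *)
Definition cyc_shift (R : realType) (A : algType R[i]) (n : nat)
    (e : 'I_n -> 'I_n -> A) : A :=
  \sum_(i : 'I_n) e i (ordS i).

(* Main.v *)
Require Import Defs.
From mathcomp Require Import all_boot all_algebra.
From mathcomp Require Import reals.
From mathcomp.real_closed Require Import complex.
Import GRing.Theory Num.Theory.
Local Open Scope ring_scope.
From mathcomp Require Import all_order.
From mathcomp Require Import ring lra zify.
Import Order.TTheory.

Section Analytic.
Variable R : realType.
Variable A : algType R[i].
Variables (st : A -> A) (nrm : A -> R) (tau : A -> R[i]).
Hypothesis HC : is_Cstar_algebra st nrm.
Hypothesis HS : is_state st tau.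

Ltac hc HC := let h := fresh in have [?[?[?[?[?[?[?[?[? ?]]]]]]]]] := HC.
Lemma stK a : st (st a) = a. Proof. hc HC; by auto. Qed.
Lemma stD a b : st (a + b) = st a + st b. Proof. hc HC; by auto. Qed.
Lemma stZ c a : st (c *: a) = c^* *: st a. Proof. hc HC; by auto. Qed.
Lemma stM a b : st (a * b) = st b * st a. Proof. hc HC; by auto. Qed.
Lemma nrm_eq0 a : nrm a = 0 -> a = 0. Proof. hc HC; by auto. Qed.
Lemma nrmD a b : nrm (a + b) <= nrm a + nrm b.
Proof. hc HC; by auto. Qed.
Lemma nrmZ c a : ((nrm (c *: a))%:C)%C = `|c| * ((nrm a)%:C)%C.
Proof. hc HC; by auto. Qed.
Lemma nrmM a b : nrm (a * b) <= nrm a * nrm b.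
Proof. hc HC; by auto. Qed.
Lemma nrmC a : nrm (st a * a) = nrm a ^+ 2.
Proof. hc HC; by auto. Qed.
Lemma nrm_complete (x : nat -> A) :
  (forall e : R, 0 < e -> exists N, forall p q, (N <= p)%N -> (N <= q)%N ->
            nrm (x p - x q) < e) ->
  exists l, forall e : R, 0 < e -> exists N, forall p, (N <= p)%N ->
            nrm (x p - l) < e.
Proof. hc HC; by auto. Qed.

Lemma tauL c a b : tau (c *: a + b) = c * tau a + tau b. Proof. by case: HS. Qed.
Lemma tau1 : tau 1 = 1. Proof. by case: HS. Qed.
Lemma tau_pos a : 0 <= tau (st a * a). Proof. by case: HS. Qed.
Lemma tau0 : tau 0 = 0.
Proof.
have := tauL 1 0 0; rewrite scale1r addr0 mul1r => /eqP.
by rewrite -subr_eq0 opprD addrA subrr add0r oppr_eq0 => /eqP.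
Qed.
Lemma tauD a b : tau (a + b) = tau a + tau b.
Proof. by have := tauL 1 a b; rewrite scale1r mul1r. Qed.
Lemma tauZ c a : tau (c *: a) = c * tau a.
Proof. by have := tauL c a 0; rewrite !addr0 tau0 addr0. Qed.
Lemma tauN a : tau (- a) = - tau a.
Proof. by rewrite -scaleN1r tauZ mulN1r. Qed.
Lemma tauB a b : tau (a - b) = tau a - tau b.
Proof. by rewrite tauD tauN. Qed.

Lemma st0 : st 0 = 0.
Proof.
have := stD 0 0; rewrite addr0 => /eqP.
by rewrite -subr_eq0 opprD addrA subrr add0r oppr_eq0 => /eqP.
Qed.
Lemma stN a : st (- a) = - st a.
Proof. by apply/eqP; rewrite -subr_eq0 opprK -stD addNr st0. Qed.
Lemma stB a b : st (a - b) = st a - st b.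
Proof. by rewrite stD stN. Qed.
Lemma st1 : st 1 = 1.
Proof.
by have := stM 1 (st 1); rewrite mul1r stK mul1r => h; rewrite -h.
Qed.

Lemma nrm0 : nrm 0 = 0.
Proof.
have := nrmZ 0 0; rewrite scale0r normr0 mul0r.
by move/complexI.
Qed.
Lemma nrm_unit c a : `|c| = 1 -> nrm (c *: a) = nrm a.
Proof. by move=> h; have := nrmZ c a; rewrite h mul1r => /complexI. Qed.
Lemma nrmN a : nrm (- a) = nrm a.
Proof. by rewrite -scaleN1r nrm_unit // normrN normr1. Qed.
Lemma nrm_ge0 a : 0 <= nrm a.
Proof.
have := nrmD a (- a); rewrite subrr nrm0 nrmN.
move=> h; have : 0 <= nrm a *+ 2 by rewrite mulr2n.
by rewrite pmulrn_lge0.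
Qed.
Lemma nrmZr (r : R) a : 0 <= r -> nrm ((r%:C)%C *: a) = r * nrm a.
Proof.
move=> r0; have := nrmZ (r%:C)%C a.
rewrite ger0_norm ?ler0c // -rmorphM.
by move/complexI.
Qed.
Lemma nrmBC a b : nrm (a - b) = nrm (b - a).
Proof. by rewrite -nrmN opprB. Qed.
Lemma nrm_st a : nrm (st a) = nrm a.
Proof.
suff H : forall b, nrm b <= nrm (st b).
  by apply/eqP; rewrite eq_le H -{2}(stK a) H.
move=> b; have := nrmC b; have := nrmM (st b) b => h1 h2.
rewrite h2 expr2 in h1.
have [b0|bpos] := eqVneq (nrm b) 0; first by rewrite b0 nrm_ge0.
have bp : 0 < nrm b by rewrite lt_def bpos nrm_ge0.
by rewrite -(ler_pM2r bp).
Qed.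
Lemma nrm_tri3 a b c : nrm (a - c) <= nrm (a - b) + nrm (b - c).
Proof. by have := nrmD (a - b) (b - c); rewrite addrA subrK. Qed.

Lemma small_le0 (v K : R) : 0 <= K ->
  (forall eta, 0 < eta -> eta <= 1 -> v <= eta * K) -> v <= 0.
Proof.
move=> K0 H; rewrite leNgt; apply/negP => v0.
set w := Num.min 1 (v / (K + 1)).
have K1 : 0 < K + 1 by lra.
have w1 : w <= 1 by rewrite ge_min lexx.
have w2 : w <= v / (K + 1) by rewrite ge_min lexx orbT.
have w0 : 0 < w by rewrite lt_min ltr01 divr_gt0.
have := H w w0 w1.
have e : v / (K + 1) * (K + 1) = v by rewrite mulfVK // gt_eqF.
have h3 : w * K <= v / (K + 1) * K by rewrite ler_wpM2r.
move: e h3; set t := v / (K + 1) => e h3 h4.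
move=> *; nra.
Qed.

Lemma small_pow (e : R) : 0 < e -> exists N, (2^-1 : R) ^+ N < e.
Proof.
move=> e0; exists (Num.Def.archi_bound e^-1).
set N := Num.Def.archi_bound e^-1.
have h1 : e^-1 < N%:R by apply: archi_boundP; rewrite invr_ge0 ltW.
have h2 : (N%:R : R) < 2 ^+ N.
  by rewrite -natrX ltr_nat ltn_expl.
rewrite exprVn invf_plt ?posrE ?exprn_gt0 //.
exact: lt_trans h2.
Qed.

Section Sqrt.
Variable x : A.
Hypothesis xs : st x = x.
Hypothesis xn : nrm x <= 2^-1.
Let c2 : R[i] := (((2^-1 : R))%:C)%C.
Let Tm g := c2 *: (x + g * g).
Fixpoint gs N := if N is N'.+1 then Tm (gs N') else 0.

Lemma nrmT g : nrm (Tm g) = 2^-1 * nrm (x + g * g).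
Proof. by rewrite /Tm /c2 nrmZr // invr_ge0 ler0n. Qed.

Lemma gs_bd N : nrm (gs N) <= 2^-1.
Proof.
elim: N => [|N IH] /=; first by rewrite nrm0 invr_ge0 ler0n.
rewrite nrmT; have := nrmD x (gs N * gs N); have := nrmM (gs N) (gs N).
have := ler_pM (nrm_ge0 _) (nrm_ge0 _) IH IH => h1 h2 h3.
move: (nrm x) (nrm (gs N)) (nrm (gs N * gs N)) (nrm (x + gs N * gs N)) xn IH h1 h2 h3 => a b c d *; lra.
Qed.

Lemma Tm_diff a b : nrm a <= 2^-1 -> nrm b <= 2^-1 ->
  nrm (Tm a - Tm b) <= 2^-1 * nrm (a - b).
Proof.
move=> ha hb.
have -> : Tm a - Tm b = c2 *: (a * (a - b) + (a - b) * b).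
  rewrite /Tm -scalerBr; congr (_ *: _).
  by rewrite mulrBr mulrBl opprD addrACA subrr add0r addrA subrK.
rewrite /c2 nrmZr ?invr_ge0 ?ler0n //.
have := nrmD (a * (a - b)) ((a - b) * b).
have := nrmM a (a - b); have := nrmM (a - b) b.
have := nrm_ge0 a; have := nrm_ge0 b; have := nrm_ge0 (a - b).
move=> *; nra.
Qed.

Lemma gs_step N : nrm (gs N.+1 - gs N) <= (2^-1) ^+ N.
Proof.
elim: N => [|N IH].
  rewrite /= subr0 expr0; have := gs_bd 1; rewrite /=; move=> *; lra.
rewrite [gs N.+2]/= [gs N.+1]/=.
have := Tm_diff _ _ (gs_bd N.+1) (gs_bd N); rewrite [gs N.+1]/= exprS.
have := nrm_ge0 (Tm (gs N) - gs N).
move=> *; nra.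
Qed.

Lemma gs_cauchy p d :
  nrm (gs (p + d) - gs p) <= 2 * (2^-1) ^+ p - 2 * (2^-1) ^+ (p + d).
Proof.
elim: d => [|d IH]; first by rewrite addn0 subrr nrm0 subrr.
have := nrm_tri3 (gs (p + d.+1)) (gs (p + d)) (gs p).
rewrite addnS; have := gs_step (p + d).
rewrite exprS; move=> *; lra.
Qed.

Lemma gs_cauchy' p q : (p <= q)%N -> nrm (gs q - gs p) <= 2 * (2^-1) ^+ p.
Proof.
move=> pq; have := gs_cauchy p (q - p); rewrite subnKC //.
have : 0 <= (2^-1 : R) ^+ q by rewrite exprn_ge0 // invr_ge0 ler0n.
move=> *; lra.
Qed.

Lemma gs_st N : st (gs N) = gs N.
Proof.
elim: N => [|N IH] /=; first exact: st0.
rewrite /Tm stZ stD stM IH xs /c2 conj_Creal //.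
by apply/complex_realP; eexists.
Qed.

Lemma sqrt_ex : exists z, st z * z = 1 - x.
Proof.
have [L HL] : exists L, forall e : R, 0 < e -> exists N, forall p, (N <= p)%N ->
            nrm (gs p - L) < e.
  apply: nrm_complete => e e0.
  have e2 : 0 < e / 2 by rewrite divr_gt0 // ltr0n.
  have [N HN] := small_pow _ e2.
  exists N => p q Np Nq.
  have hp : (2^-1 : R) ^+ p <= (2^-1) ^+ N.
    by apply: ler_wiXn2l => //; rewrite ?invr_ge0 ?ler0n // invf_le1 ?ler1n.
  have hq : (2^-1 : R) ^+ q <= (2^-1) ^+ N.
    by apply: ler_wiXn2l => //; rewrite ?invr_ge0 ?ler0n // invf_le1 ?ler1n.
  have [pq|qp] := leqP p q.
    rewrite nrmBC; have := gs_cauchy' _ _ pq; move=> *; lra.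
  have := gs_cauchy' _ _ (ltnW qp); move=> *; lra.
have Lbd : nrm L <= 2^-1.
  rewrite -subr_le0; apply: (@small_le0 _ 1) => // eta eta0 eta1.
  have [N HN] := HL eta eta0.
  have := nrm_tri3 L (gs N) 0; rewrite !subr0 nrmBC.
  have := HN N (leqnn N); have := gs_bd N; move=> *; lra.
have Lfix : L = Tm L.
  apply/eqP; rewrite -subr_eq0; apply/eqP; apply: nrm_eq0.
  apply/eqP; rewrite eq_le nrm_ge0 andbT.
  apply: (@small_le0 _ 2) => // eta eta0 eta1.
  have [N HN] := HL eta eta0.
  have := nrm_tri3 L (gs N.+1) (Tm L).
  have := Tm_diff _ _ (gs_bd N) Lbd; rewrite -/(gs N.+1) => h.
  have := HN N (leqnn N); have := HN N.+1 (leqnSn N).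
  have := nrmBC L (gs N.+1); move=> *; lra.
have Lst : st L = L.
  apply/eqP; rewrite -subr_eq0; apply/eqP; apply: nrm_eq0.
  apply/eqP; rewrite eq_le nrm_ge0 andbT.
  apply: (@small_le0 _ 2) => // eta eta0 eta1.
  have [N HN] := HL eta eta0.
  have := nrm_tri3 (st L) (gs N) L.
  rewrite -{1}(gs_st N) -stB nrm_st nrmBC.
  have := HN N (leqnn N); have := nrmBC L (gs N); move=> *; lra.
exists (1 - L); rewrite stB st1 Lst.
have hx : x = L *+ 2 - L * L.
  have -> : L *+ 2 = (2 : R[i]) *: L by rewrite scaler_nat.
  rewrite {1}Lfix /Tm scalerA /c2 -[2 : R[i]](rmorph_nat (real_complex R)).
  rewrite -rmorphM /= mulfV ?pnatr_eq0 // rmorph1 scale1r.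
  by rewrite addrK.
rewrite hx !(mulrBl, mulrBr) !(mul1r, mulr1) mulr2n.
rewrite !opprD !opprK !addrA.
by rewrite addrAC.
Qed.

End Sqrt.

Lemma tau_sa_half h : st h = h -> nrm h <= 2^-1 -> `|tau h| <= 1.
Proof.
move=> hs hn.
have [z1 hz1] := sqrt_ex h hs hn.
have hs' : st (- h) = - h by rewrite stN hs.
have hn' : nrm (- h) <= 2^-1 by rewrite nrmN.
have [z2 hz2] := sqrt_ex (- h) hs' hn'.
have p1 := tau_pos z1; rewrite hz1 tauB tau1 in p1.
have p2 := tau_pos z2; rewrite hz2 tauB tau1 tauN opprK in p2.
have r1 : (1 - tau h) \is Num.real by apply: ger0_real.
have r : tau h \is Num.real.
  have -> : tau h = 1 - (1 - tau h) by rewrite opprB addrC subrK.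
  by rewrite rpredB // real1.
rewrite real_ler_norml //; apply/andP; split.
  by rewrite -subr_ge0 opprK addrC.
by rewrite -subr_ge0.
Qed.

Lemma realC_real (r : R) : ((r%:C)%C : R[i]) \is Num.real.
Proof. by apply/complex_realP; eexists. Qed.

Lemma tau_sa h : st h = h -> `|tau h| <= ((2 * nrm h)%:C)%C.
Proof.
move=> hs.
have [h0|hne] := eqVneq (nrm h) 0.
  by rewrite (nrm_eq0 _ h0) tau0 normr0 nrm0 mulr0 rmorph0.
have rp : 0 < nrm h by rewrite lt_def hne nrm_ge0.
set r := nrm h in rp hne *.
have r2 : 0 < 2 * r by rewrite mulr_gt0.
set h' := (((2 * r)^-1)%:C)%C *: h.
have h's : st h' = h' by rewrite /h' stZ hs conj_Creal // realC_real.
have h'n : nrm h' = 2^-1.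
  rewrite /h' nrmZr; last by rewrite invr_ge0 ltW.
  by rewrite invfM -mulrA mulVf // mulr1.
have hb : `|tau h'| <= 1 by apply: tau_sa_half; rewrite ?h'n.
have e : tau h = ((2 * r)%:C)%C * tau h'.
  by rewrite /h' tauZ mulrA -rmorphM mulfV ?gt_eqF // rmorph1 mul1r.
have r2' : 0 <= ((2 * r)%:C)%C :> R[i] by rewrite ler0c ltW.
rewrite e normrM (ger0_norm r2').
by rewrite -[X in _ <= X]mulr1 ler_wpM2l.
Qed.

Lemma tau_bound y : `|tau y| <= ((4 * nrm y)%:C)%C.
Proof.
pose c2 : R[i] := ((2^-1 : R)%:C)%C.
pose h1 := c2 *: (y + st y).
pose h2 := c2 *: ('i *: (st y - y)).
have c2r : c2^* = c2 by rewrite conj_Creal // realC_real.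
have c2two : c2 + c2 = 1.
  have e : (2^-1 + 2^-1 : R) = 1 by rewrite {3}(splitr 1) div1r.
  by rewrite /c2 -rmorphD e rmorph1.
have ii : 'i * 'i = -1 :> R[i] by rewrite -expr2 sqrCi.
have ey : y = h1 + 'i *: h2.
  rewrite /h2 !scalerA [('i * c2)]mulrC -mulrA ii mulrN1 scaleNr -scalerN opprB /h1 -scalerDr.
  by rewrite addrACA subrr addr0 scalerDr -scalerDl c2two scale1r.
have h1s : st h1 = h1 by rewrite /h1 stZ c2r stD stK addrC.
have h2s : st h2 = h2.
  rewrite /h2 !stZ c2r stB stK conjCi; congr (c2 *: _).
  by rewrite scaleNr -scalerN opprB.
have n1 : nrm h1 <= nrm y.
  rewrite /h1 /c2 nrmZr ?invr_ge0 ?ler0n //.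
  have := nrmD y (st y); rewrite nrm_st; move=> *; lra.
have n2 : nrm h2 <= nrm y.
  rewrite /h2 /c2 nrmZr ?invr_ge0 ?ler0n // nrm_unit ?normCi //.
  have := nrmD (st y) (- y); rewrite nrmN nrm_st; move=> *; lra.
have t1 := tau_sa _ h1s; have t2 := tau_sa _ h2s.
rewrite {1}ey tauD (tauZ 'i h2).
apply: le_trans (ler_normD _ _) _.
rewrite normrM normCi mul1r.
apply: le_trans (lerD t1 t2) _.
rewrite -rmorphD lecR; move=> *; lra.
Qed.

Lemma small_norm0 (w : R[i]) :
  (forall e : R, 0 < e -> `|w| <= ((e)%:C)%C) -> w = 0.
Proof.
move=> H; apply/normr0_eq0.
move: H; rewrite normc_def; set s := Num.sqrt _ => H.
have s0 : 0 <= s by apply: sqrtr_ge0.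
suff hs : s <= 0.
  by have -> : s = 0 by apply/eqP; rewrite eq_le hs s0.
rewrite leNgt; apply/negP => sp.
have := H (s / 2); rewrite lecR => h.
have : s <= s / 2 by apply: h; rewrite divr_gt0.
move=> *; lra.
Qed.

Lemma closure_tau (S : A -> Prop) v b :
  in_Cstar_gen st nrm S b ->
  (forall b', in_star_alg st S b' -> tau (b' * v) = 0 /\ tau (v * b') = 0) ->
  tau (b * v) = 0 /\ tau (v * b) = 0.
Proof.
move=> Hb H.
have K0 : 0 < nrm v + 1 by have := nrm_ge0 v; move=> *; lra.
have key : forall e : R, 0 < e -> exists b', in_star_alg st S b' /\
    4 * nrm (b - b') * nrm v <= e.
  move=> e e0.
  have t0 : 0 < e / (4 * (nrm v + 1)) by rewrite divr_gt0 // mulr_gt0.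
  have [b' [hb' hn]] := Hb _ t0.
  exists b'; split => //.
  have h1 : nrm (b - b') * nrm v <= e / (4 * (nrm v + 1)) * (nrm v + 1).
    apply: ler_pM; rewrite ?nrm_ge0 ?ltW //.
    by have := nrm_ge0 v; move=> *; lra.
  have h2 : e / (4 * (nrm v + 1)) * (nrm v + 1) = e / 4.
    by field; rewrite gt_eqF.
  rewrite h2 in h1; rewrite -mulrA; move: h1; set z := _ * _ => h1; lra.
split; apply: small_norm0 => e e0; have [b' [hb' hn]] := key e e0.
  have -> : tau (b * v) = tau ((b - b') * v).
    by rewrite mulrBl tauB (proj1 (H b' hb')) subr0.
  apply: le_trans (tau_bound _) _; rewrite lecR.
  have := nrmM (b - b') v; move=> *; lra.
have -> : tau (v * b) = tau (v * (b - b')).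
  by rewrite mulrBr tauB (proj2 (H b' hb')) subr0.
apply: le_trans (tau_bound _) _; rewrite lecR.
have := nrmM v (b - b'); rewrite [nrm v * _]mulrC; move=> *; lra.
Qed.

End Analytic.


Lemma sum_delta (V : zmodType) k (F : 'I_k -> V) (j : 'I_k) :
  \sum_i (if j == i then F i else 0) = F j.
Proof.
rewrite (bigD1 j) //= eqxx big1 ?addr0 // => i /negbTE.
by rewrite eq_sym => ->.
Qed.

Lemma sorted_rcons2 (T : Type) (r : rel T) s y z :
  sorted r (rcons s y) -> r y z -> sorted r (rcons (rcons s y) z).
Proof.
case: s => [|a s] /=; first by move=> _ ->.
by rewrite !rcons_path last_rcons => -> ->.
Qed.

Section Alg.
Variable R : realType.
Variable A : algType R[i].
Variables (st : A -> A) (nrm : A -> R) (tau : A -> R[i]) (m n : nat).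
Variables (alpha : 'I_m -> R) (p : 'I_m -> A) (e : 'I_n -> 'I_n -> A).
Hypothesis H : is_reduced_free_product st nrm tau alpha p e.
Hypothesis n0 : (0 < n)%N.

Let HC : is_Cstar_algebra st nrm. Proof. by case: H. Qed.
Let HS : is_state st tau. Proof. by case: H => _ []. Qed.
Let pst j : st (p j) = p j. Proof. by case: H => _ [_ [_ [[h _] _]]]. Qed.
Let pp j k : p j * p k = if j == k then p j else 0.
Proof. by case: H => _ [_ [_ [[_ [h _]] _]]]. Qed.
Let psum : \sum_j p j = 1. Proof. by case: H => _ [_ [_ [[_ [_ h]] _]]]. Qed.
Let est i j : st (e i j) = e j i. Proof. by case: H => _ [_ [_ [_ [[h _] _]]]]. Qed.
Let ee i j k l : e i j * e k l = if j == k then e i l else 0.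
Proof. by case: H => _ [_ [_ [_ [[_ [h _]] _]]]]. Qed.
Let esum : \sum_i e i i = 1. Proof. by case: H => _ [_ [_ [_ [[_ [_ h]] _]]]]. Qed.
Let taue i j : tau (e i j) = if i == j then (n%:R)^-1 else 0.
Proof. by case: H => _ [_ [_ [_ [_ [[_ h] _]]]]]. Qed.
Let free : free_pair tau (span_proj p) (span_mu e).
Proof. by case: H => _ [_ [_ [_ [_ [_ [h _]]]]]]. Qed.

Definition sh d (i : 'I_n) : 'I_n := Ordinal (ltn_pmod (i + d) n0).

Lemma sh_add d1 d2 i : sh d2 (sh d1 i) = sh (d1 + d2) i.
Proof. by apply: val_inj => /=; rewrite modnDml addnA. Qed.

Lemma sh_0 d i : (d %% n = 0)%N -> sh d i = i.
Proof.
by move=> h; apply: val_inj => /=; rewrite -modnDmr h addn0 modn_small.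
Qed.

Lemma sh_neq d i : (d %% n != 0)%N -> i != sh d i.
Proof.
move=> h; apply/eqP => /(congr1 val) /= hi; move: h.
have : (i + d == i + 0 %[mod n])%N by rewrite addn0 (modn_small (ltn_ord i)) -hi.
by rewrite eqn_modDl mod0n => /eqP ->.
Qed.

Let stD' := @stD R A st nrm HC.
Let stZ' := @stZ R A st nrm HC.
Let stM' := @stM R A st nrm HC.
Let stK' := @stK R A st nrm HC.
Let st0' := @st0 R A st nrm HC.
Let st1' := @st1 R A st nrm HC.
Let tauD' := @tauD R A st tau HS.
Let tauZ' := @tauZ R A st tau HS.
Let tau0' := @tau0 R A st tau HS.
Let tau1' := @tau1 R A st tau HS.
Let tauB' := @tauB R A st tau HS.

Lemma st_sum (I : Type) (r : seq I) (P : pred I) (F : I -> A) :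
  st (\sum_(i <- r | P i) F i) = \sum_(i <- r | P i) st (F i).
Proof. exact: (big_morph st stD' st0'). Qed.

Lemma tau_sum (I : Type) (r : seq I) (P : pred I) (F : I -> A) :
  tau (\sum_(i <- r | P i) F i) = \sum_(i <- r | P i) tau (F i).
Proof. exact: (big_morph tau tauD' tau0'). Qed.

Definition homd d a := exists c : 'I_n -> R[i], a = \sum_i c i *: e i (sh d i).

Lemma homd_add d a b : homd d a -> homd d b -> homd d (a + b).
Proof.
move=> [c ->] [c' ->]; exists (fun i => c i + c' i).
by rewrite -big_split; apply: eq_bigr => i _; rewrite scalerDl.
Qed.

Lemma homd_scale d k a : homd d a -> homd d (k *: a).
Proof.
move=> [c ->]; exists (fun i => k * c i).
by rewrite scaler_sumr; apply: eq_bigr => i _; rewrite scalerA.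
Qed.

Lemma homd_one d : (d %% n = 0)%N -> homd d 1.
Proof.
move=> h; exists (fun _ => 1); rewrite -esum; apply: eq_bigr => i _.
by rewrite scale1r sh_0.
Qed.

Lemma homd_mul d1 d2 a b : homd d1 a -> homd d2 b -> homd (d1 + d2) (a * b).
Proof.
move=> [c ->] [c' ->]; exists (fun i => c i * c' (sh d1 i)).
rewrite mulr_suml; apply: eq_bigr => i _; rewrite mulr_sumr.
rewrite (eq_bigr (fun k => if sh d1 i == k then (c i * c' k) *: e i (sh d2 k) else 0)).
  by rewrite sum_delta /= sh_add.
move=> k _; rewrite -scalerAl -scalerAr ee scalerA.
by case: eqP => _; rewrite ?scaler0.
Qed.

Lemma homd_st d a : homd d a -> homd (d * (n - 1)) (st a).
Proof.
move=> [c ->]; set D := (d * (n - 1))%N.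
have hD : ((D + d) %% n = 0)%N.
  rewrite /D -{2}(muln1 d) -mulnDr subnK //.
  by rewrite modnMl.
have hD' : ((d + D) %% n = 0)%N by rewrite addnC.
exists (fun j => (c (sh D j))^*).
rewrite st_sum (reindex (sh D)) /=.
  by apply: eq_bigr => j _; rewrite stZ' est sh_add (sh_0 _ _ hD).
by exists (sh d) => i _; rewrite sh_add ?(sh_0 _ _ hD) ?(sh_0 _ _ hD').
Qed.

Lemma sp_add a b : span_proj p a -> span_proj p b -> span_proj p (a + b).
Proof.
move=> [c ->] [c' ->]; exists (fun i => c i + c' i).
by rewrite -big_split; apply: eq_bigr => i _; rewrite scalerDl.
Qed.

Lemma sp_scale k a : span_proj p a -> span_proj p (k *: a).
Proof.
move=> [c ->]; exists (fun i => k * c i).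
by rewrite scaler_sumr; apply: eq_bigr => i _; rewrite scalerA.
Qed.

Lemma sp_one : span_proj p 1.
Proof.
exists (fun _ => 1); rewrite -psum; apply: eq_bigr => i _.
by rewrite scale1r.
Qed.

Lemma sp_mul a b : span_proj p a -> span_proj p b -> span_proj p (a * b).
Proof.
move=> [c ->] [c' ->]; exists (fun i => c i * c' i).
rewrite mulr_suml; apply: eq_bigr => i _; rewrite mulr_sumr.
rewrite (eq_bigr (fun k => if i == k then (c i * c' k) *: p i else 0)).
  by rewrite sum_delta /=.
move=> k _; rewrite -scalerAl -scalerAr pp scalerA.
by case: eqP => _; rewrite ?scaler0.
Qed.

Lemma sp_st a : span_proj p a -> span_proj p (st a).
Proof.
move=> [c ->]; exists (fun j => (c j)^*).
by rewrite st_sum; apply: eq_bigr => j _; rewrite stZ' pst.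
Qed.

Definition hom (it : bool * nat * A) : Prop :=
  if it.1.1 then (it.1.2 = 0)%N /\ span_proj p it.2 else homd it.1.2 it.2.
Fixpoint allh (s : seq (bool * nat * A)) : Prop :=
  if s is x :: s' then hom x /\ allh s' else True.
Fixpoint cent (s : seq (bool * nat * A)) : Prop :=
  if s is x :: s' then tau x.2 = 0 /\ cent s' else True.
Definition sumdeg (s : seq (bool * nat * A)) : nat := (\sum_(it <- s) it.1.2)%N.
Definition prodw (s : seq (bool * nat * A)) : A := \prod_(it <- s) it.2.
Definition alt (x y : bool * nat * A) := x.1.1 != y.1.1.

Lemma allh_cat s1 s2 : allh (s1 ++ s2) <-> allh s1 /\ allh s2.
Proof. by elim: s1 => [|x s1 IH] /=; [tauto | rewrite IH; tauto]. Qed.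
Lemma allh_rcons s x : allh (rcons s x) <-> allh s /\ hom x.
Proof. by rewrite -cats1 allh_cat /=; tauto. Qed.
Lemma cent_cat s1 s2 : cent (s1 ++ s2) <-> cent s1 /\ cent s2.
Proof. by elim: s1 => [|x s1 IH] /=; [tauto | rewrite IH; tauto]. Qed.
Lemma cent_rcons s x : cent (rcons s x) <-> cent s /\ tau x.2 = 0.
Proof. by rewrite -cats1 cent_cat /=; tauto. Qed.
Lemma allh_in s it : allh s -> it \in s -> hom it.
Proof.
elim: s => [|x s IH] //= [hx hs]; rewrite in_cons => /orP [/eqP -> //|].
exact: IH.
Qed.
Lemma cent_in s it : cent s -> it \in s -> tau it.2 = 0.
Proof.
elim: s => [|x s IH] //= [hx hs]; rewrite in_cons => /orP [/eqP -> //|].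
exact: IH.
Qed.

Lemma homd_tau d a : homd d a -> (d %% n != 0)%N -> tau a = 0.
Proof.
move=> [c ->] hd; rewrite tau_sum big1 // => i _.
by rewrite tauZ' taue (negbTE (sh_neq _ _ hd)) mulr0.
Qed.

Lemma hom_tau_deg x : hom x -> tau x.2 != 0 -> (x.1.2 %% n = 0)%N.
Proof.
case: x => [[b d] a]; rewrite /hom /=; case: b => /=; first by case=> -> _; rewrite mod0n.
move=> hd; apply: contraNeq => hn; apply/eqP; exact: homd_tau hd hn.
Qed.

Lemma hom_center x : hom x -> hom (x.1, x.2 - tau x.2 *: 1).
Proof.
case: x => [[b d] a]; rewrite /hom /=; case: b => /=.
  case=> -> ha; split => //; apply: sp_add => //.
  by rewrite -scaleNr; apply: sp_scale; apply: sp_one.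
move=> hd; have [h0|h0] := eqVneq (d %% n)%N 0%N.
  apply: homd_add => //; rewrite -scaleNr; apply: homd_scale.
  exact: homd_one.
by rewrite (homd_tau _ _ hd h0) scale0r subr0.
Qed.

Lemma tau_center a : tau (a - tau a *: 1) = 0.
Proof. by rewrite tauB' tauZ' tau1' mulr1 subrr. Qed.

Lemma hom_merge x y : hom x -> hom y -> x.1.1 = y.1.1 ->
  hom (x.1.1, (x.1.2 + y.1.2)%N, x.2 * y.2).
Proof.
case: x => [[b d] a]; case: y => [[b' d'] a']; rewrite /hom /= => hx hy E; subst b'.
case: b hx hy => /=.
  by case=> -> hx [-> hy]; split => //; apply: sp_mul.
exact: homd_mul.
Qed.

Lemma homd_mu d a : homd d a -> span_mu e a.
Proof.
move=> [c ->]; exists (fun i j => if sh d i == j then c i else 0).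
apply: eq_bigr => i _.
rewrite (eq_bigr (fun j => if sh d i == j then c i *: e i j else 0)).
  by rewrite sum_delta.
by move=> j _; case: eqP => _; rewrite ?scale0r.
Qed.

Lemma hom_free x : hom x -> if x.1.1 then span_proj p x.2 else span_mu e x.2.
Proof.
case: x => [[b d] a]; rewrite /hom /=; case: b => /=; first by case.
exact: homd_mu.
Qed.

Lemma sumdeg_cat s1 s2 : sumdeg (s1 ++ s2) = (sumdeg s1 + sumdeg s2)%N.
Proof. by rewrite /sumdeg big_cat. Qed.
Lemma sumdeg_cons x s : sumdeg (x :: s) = (x.1.2 + sumdeg s)%N.
Proof. by rewrite /sumdeg big_cons. Qed.
Lemma prodw_cat s1 s2 : prodw (s1 ++ s2) = prodw s1 * prodw s2.
Proof. by rewrite /prodw big_cat. Qed.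
Lemma prodw_cons x s : prodw (x :: s) = x.2 * prodw s.
Proof. by rewrite /prodw big_cons. Qed.
Lemma prodw_nil : prodw [::] = 1.
Proof. by rewrite /prodw big_nil. Qed.
Lemma sumdeg_nil : sumdeg [::] = 0%N.
Proof. by rewrite /sumdeg big_nil. Qed.

Lemma KL N : forall s, (size s <= N)%N -> allh s -> (sumdeg s %% n != 0)%N ->
  tau (prodw s) = 0.
Proof.
elim: N => [|N IH] s.
  by rewrite leqn0 size_eq0 => /eqP -> _; rewrite sumdeg_nil mod0n.
move=> hs ha hd.
suff inner : forall post pre, (size pre + size post <= N.+1)%N -> allh pre ->
    allh post -> cent pre -> sorted alt pre ->
    (sumdeg (pre ++ post) %% n != 0)%N -> tau (prodw pre * prodw post) = 0.
  by have := inner s [::]; rewrite prodw_nil mul1r; apply.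
elim => [|x post IHp] pre hsz hpre hpost hc halt hdeg.
  rewrite prodw_nil mulr1.
  have -> : prodw pre = \prod_(y <- [seq (it.1.1, it.2) | it <- pre]) y.2.
    by rewrite big_map.
  apply: free.
  - case: pre {hsz hpre hc halt} hdeg => //.
    by rewrite cats0 sumdeg_nil mod0n.
  - move=> y /mapP [it hit ->] /=; split.
      exact: hom_free (allh_in _ _ hpre hit).
    exact: cent_in _ _ hc hit.
  - by rewrite sorted_map.
have hx : hom x by case: hpost.
have hpost' : allh post by case: hpost.
set t := tau x.2.
have center : (pre = [::] \/ exists pre0 y, pre = rcons pre0 y /\ y.1.1 != x.1.1) ->
    tau (prodw pre * prodw (x :: post)) = 0.
  move=> hok.
  set x0 := (x.1, x.2 - t *: 1).
  have ex : prodw (x :: post) = x0.2 * prodw post + t *: prodw post.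
    by rewrite prodw_cons /= mulrBl -scalerAl mul1r subrK.
  rewrite ex mulrDr tauD' mulrA.
  have -> : prodw pre * x0.2 = prodw (rcons pre x0).
    by rewrite -cats1 prodw_cat prodw_cons prodw_nil mulr1.
  rewrite (IHp (rcons pre x0)) ?add0r.
  - rewrite -scalerAr tauZ' -prodw_cat.
    have [t0|tn0] := eqVneq t 0; first by rewrite t0 mul0r.
    have hd0 := hom_tau_deg _ hx tn0.
    rewrite (IH (pre ++ post)) ?mulr0 //.
    + by rewrite size_cat; move: hsz; rewrite /= addnS ltnS.
    + by apply/allh_cat.
    + move: hdeg; rewrite !sumdeg_cat sumdeg_cons.
      by rewrite addnCA -modnDml hd0 add0n.
  - by rewrite size_rcons; move: hsz; rewrite /= addnS addSn.
  - by apply/allh_rcons; split => //; apply: hom_center.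
  - by [].
  - by apply/cent_rcons; split => //; apply: tau_center.
  - case: hok => [E|[pre0 [y [E hy]]]]; rewrite E //= in halt *.
    exact: (@sorted_rcons2 _ alt pre0 y x0 halt hy).
  - move: hdeg; rewrite -cats1 -catA /= !sumdeg_cat !sumdeg_cons.
    by [].
have [Ep|[pre0 [y Ey]]] : pre = [::] \/ exists pre0 y, pre = rcons pre0 y.
  by case/lastP: pre {hsz hpre hc halt hdeg center} => [|pre0 y]; [left|right; exists pre0, y].
  by apply: center; left.
have [hne|heq] := boolP (y.1.1 != x.1.1).
  by apply: center; right; exists pre0, y.
move/negPn/eqP: heq => heq.
set z := (y.1.1, (y.1.2 + x.1.2)%N, y.2 * x.2).
have -> : prodw pre * prodw (x :: post) = prodw (pre0 ++ z :: post).
  by rewrite Ey -cats1 !prodw_cat !prodw_cons prodw_nil /= mulr1 !mulrA.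
have [hpre0 hy] : allh pre0 /\ hom y by apply/allh_rcons; rewrite -Ey.
apply: IH.
- move: hsz; rewrite Ey size_cat size_rcons /=; lia.
- apply/allh_cat; split => //=; split => //.
  by apply: hom_merge.
- move: hdeg; rewrite Ey -cats1 !sumdeg_cat !sumdeg_cons sumdeg_nil /=.
  by rewrite addn0 !addnA.
Qed.

Inductive S0 (M : nat) : A -> Prop :=
 | S0w s : allh s -> (sumdeg s %% M = 0)%N -> S0 M (prodw s)
 | S0add a b : S0 M a -> S0 M b -> S0 M (a + b)
 | S0scale c a : S0 M a -> S0 M (c *: a).

Lemma S0_mul M a b : S0 M a -> S0 M b -> S0 M (a * b).
Proof.
move=> ha; elim: ha b => [s hs hd | a1 a2 _ IH1 _ IH2 | c a1 _ IH] b hb.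
- elim: hb => [s' hs' hd' | b1 b2 _ IH1 _ IH2 | c b1 _ IH].
  + rewrite -prodw_cat; apply: S0w; first by apply/allh_cat.
    by rewrite sumdeg_cat -modnDm hd hd' add0n mod0n.
  + by rewrite mulrDr; apply: S0add.
  + by rewrite -scalerAr; apply: S0scale.
- by rewrite mulrDl; apply: S0add; [apply: IH1 | apply: IH2].
- by rewrite -scalerAl; apply: S0scale; apply: IH.
Qed.

Definition stit (it : bool * nat * A) : bool * nat * A :=
  (it.1.1, (it.1.2 * (n - 1))%N, st it.2).

Lemma st_prodw s : st (prodw s) = prodw (rev (map stit s)).
Proof.
elim: s => [|x s IH]; first by rewrite prodw_nil st1'.
rewrite prodw_cons stM' IH /= rev_cons -cats1 prodw_cat prodw_cons prodw_nil.
by rewrite mulr1.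
Qed.

Lemma hom_st x : hom x -> hom (stit x).
Proof.
case: x => [[b d] a]; rewrite /hom /stit /=; case: b => /=.
  by case=> -> h; split => //; apply: sp_st.
exact: homd_st.
Qed.

Lemma allh_st s : allh s -> allh (rev (map stit s)).
Proof.
elim: s => [|x s IH] //= [hx hs]; rewrite rev_cons; apply/allh_rcons.
by split; [apply: IH | apply: hom_st].
Qed.

Lemma sumdeg_st s : sumdeg (rev (map stit s)) = (sumdeg s * (n - 1))%N.
Proof.
elim: s => [|x s IH]; first by rewrite sumdeg_nil.
rewrite /= rev_cons -cats1 sumdeg_cat IH sumdeg_cons sumdeg_cons sumdeg_nil.
by rewrite /stit /= addn0 mulnDl addnC.
Qed.

Lemma S0_st M a : S0 M a -> S0 M (st a).
Proof.
elim => [s hs hd | a1 a2 _ IH1 _ IH2 | c a1 _ IH].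
- rewrite st_prodw; apply: S0w; first exact: allh_st.
  by rewrite sumdeg_st -modnMml hd mul0n mod0n.
- by rewrite stD'; apply: S0add.
- by rewrite stZ'; apply: S0scale.
Qed.

Lemma star_S0 M (G : A -> Prop) : (forall a, G a -> S0 M a) ->
  forall a, in_star_alg st G a -> S0 M a.
Proof.
move=> hG a; elim => {a}.
- by move=> a /hG.
- by rewrite -prodw_nil; apply: S0w => //; rewrite sumdeg_nil mod0n.
- by move=> a b _ ha _ hb; apply: S0add.
- by move=> c a _ ha; apply: S0scale.
- by move=> a b _ ha _ hb; apply: S0_mul.
- by move=> a _ ha; apply: S0_st.
Qed.

Definition uit : bool * nat * A := (false, 1%N, cyc_shift e).

Lemma hom_uit : hom uit.
Proof.
exists (fun _ => 1); rewrite /cyc_shift /=; apply: eq_bigr => i _.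
rewrite scale1r; congr (e i _); apply: val_inj => /=.
by rewrite addn1.
Qed.

Lemma prodw_nseq k it : prodw (nseq k it) = it.2 ^+ k.
Proof.
elim: k => [|k IH]; first by rewrite prodw_nil expr0.
by rewrite /= prodw_cons IH exprS.
Qed.

Lemma allh_nseq k it : hom it -> allh (nseq k it).
Proof. by move=> h; elim: k => //= k IH. Qed.

Lemma sumdeg_nseq k it : sumdeg (nseq k it) = (k * it.1.2)%N.
Proof.
elim: k => [|k IH]; first by rewrite sumdeg_nil.
by rewrite /= sumdeg_cons IH mulSn.
Qed.

Lemma S0_tau M k b : S0 M b -> (M %| n)%N -> (0 < k)%N -> (k < M)%N ->
  tau (b * cyc_shift e ^+ k) = 0 /\ tau (cyc_shift e ^+ k * b) = 0.
Proof.
move=> hb hM k0 kM.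
have key : forall D, (D %% M = 0)%N -> ((D + k) %% n != 0)%N.
  move=> D hD; apply/negP => /eqP h.
  have h1 : (M %| D + k)%N by apply: dvdn_trans hM _; apply/eqP.
  have h2 : (M %| D)%N by apply/eqP.
  rewrite (dvdn_addr _ h2) in h1.
  by move: (dvdn_leq k0 h1); rewrite leqNgt kM.
elim: hb => [s hs hd | a1 a2 _ [IH1 IH1'] _ [IH2 IH2'] | c a1 _ [IH IH']].
- have -> : cyc_shift e ^+ k = prodw (nseq k uit) by rewrite prodw_nseq.
  have hu := allh_nseq k _ hom_uit.
  split; rewrite -prodw_cat; apply: (KL _ _ (leqnn _)).
  + by apply/allh_cat.
  + by rewrite sumdeg_cat sumdeg_nseq muln1 key.
  + by apply/allh_cat.
  + by rewrite sumdeg_cat sumdeg_nseq muln1 addnC key.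
- by rewrite mulrDl mulrDr !tauD' IH1 IH2 IH1' IH2' addr0.
- by rewrite -scalerAl -scalerAr !tauZ' IH IH' mulr0.
Qed.

Lemma hom_p j : hom (true, 0%N, p j).
Proof.
split => //=; exists (fun k => if j == k then 1 else 0).
rewrite (eq_bigr (fun k => if j == k then p k else 0)).
  by rewrite sum_delta.
by move=> k _; case: eqP => _; rewrite ?scale1r ?scale0r.
Qed.

Lemma hom_eii i : hom (false, 0%N, e i i).
Proof.
rewrite /hom /=; exists (fun k => if i == k then 1 else 0).
rewrite (eq_bigr (fun k => if i == k then e k k else 0)).
  by rewrite sum_delta.
by move=> k _; rewrite sh_0 ?mod0n //; case: eqP => _; rewrite ?scale1r ?scale0r.
Qed.

Lemma gen_conj M k j : (M %| n)%N ->
  S0 M (cyc_shift e ^+ k * p j * st (cyc_shift e) ^+ k).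
Proof.
move=> hM.
have -> : cyc_shift e ^+ k * p j * st (cyc_shift e) ^+ k =
    prodw (nseq k uit ++ (true, 0%N, p j) :: nseq k (stit uit)).
  by rewrite prodw_cat prodw_cons !prodw_nseq mulrA.
apply: S0w.
  apply/allh_cat; split; first exact: allh_nseq _ _ hom_uit.
  by split; [apply: hom_p | apply: allh_nseq; apply: hom_st; apply: hom_uit].
rewrite sumdeg_cat sumdeg_cons !sumdeg_nseq /stit /= mul1n add0n.
rewrite -mulnDr subnKC; last by apply: leq_trans n0.
by apply/eqP; apply: dvdn_mull.
Qed.

Lemma gen_eii M i : S0 M (e i i).
Proof.
have -> : e i i = prodw [:: (false, 0%N, e i i)].
  by rewrite prodw_cons prodw_nil mulr1.
apply: S0w; first by split => //; apply: hom_eii.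
by rewrite sumdeg_cons sumdeg_nil mod0n.
Qed.

Lemma gen_upow M t : (M %| t)%N -> S0 M (cyc_shift e ^+ t).
Proof.
move=> hM; rewrite -[cyc_shift e]/(uit.2) -prodw_nseq; apply: S0w.
  exact: allh_nseq _ _ hom_uit.
by rewrite sumdeg_nseq muln1; apply/eqP.
Qed.

End Alg.

Arguments S0_tau {R A st nrm tau m n alpha p e} H n0 M k b.
Arguments star_S0 {R A st nrm tau m n alpha p e} H n0 M G.
Arguments gen_conj {R A st nrm tau m n alpha p e} H n0 M k j.
Arguments gen_eii {R A m n p e} n0 M i.
Arguments gen_upow {R A m n p e} n0 M t.
Arguments closure_tau {R A st nrm tau} HC HS S v b.

Theorem corollary3p2 (R : realType) (A : algType R[i]) (st : A -> A)
    (nrm : A -> R) (tau : A -> R[i]) (m n : nat) (alpha : 'I_m -> R)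
    (p : 'I_m -> A) (e : 'I_n -> 'I_n -> A) (l : nat) :
  (2 <= n)%N ->
  (forall j, 0 < alpha j) ->
  (forall j k : 'I_m, (j <= k)%N -> alpha j <= alpha k) ->
  \sum_j alpha j = 1 ->
  is_reduced_free_product st nrm tau alpha p e ->
  (l %| n)%N -> (1 < l)%N -> (l < n)%N ->
  let u := cyc_shift e in
  let B := in_Cstar_gen st nrm
             (fun x => (exists (k : nat) (j : 'I_m), (k <= n - 1)%N /\
                          x = u ^+ k * p j * st u ^+ k)
                       \/ exists i : 'I_n, x = e i i) in
  let E := in_Cstar_gen st nrm
             (fun x => (exists (k : nat) (j : 'I_m), (k <= l - 1)%N /\
                          x = u ^+ k * p j * st u ^+ k)
                       \/ (exists i : 'I_n, x = e i i)
                       \/ exists t : nat, (1 <= t)%N /\ (t <= n %/ l - 1)%N /\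
                          x = u ^+ (l * t)) in
  (forall b k, B b -> (0 < k)%N -> (k <= n - 1)%N ->
     tau (b * u ^+ k) = 0 /\ tau (u ^+ k * b) = 0) /\
  (forall x k, E x -> (0 < k)%N -> (k <= l - 1)%N ->
     tau (x * u ^+ k) = 0 /\ tau (u ^+ k * x) = 0).
Proof.
move=> n2 _ _ _ H ldvd l1 ln u B E.
have n0 : (0 < n)%N by apply: leq_trans n2.
have HC : is_Cstar_algebra st nrm by case: H.
have HS : is_state st tau by case: H => _ [].
split.
- move=> b k Bb k0 kn.
  apply: (closure_tau HC HS _ _ _ Bb) => b' hb'.
  apply: (S0_tau H n0 n) => //.
  + apply: (star_S0 H n0 n _ _ _ hb') => a [[k' [j [_ ->]]]|[i ->]].
      exact: (gen_conj H n0 n k' j (dvdnn n)).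
    exact: (gen_eii n0 n i).
  + lia.
- move=> b k Eb k0 kl.
  apply: (closure_tau HC HS _ _ _ Eb) => b' hb'.
  apply: (S0_tau H n0 l) => //.
  + apply: (star_S0 H n0 l _ _ _ hb') => a [[k' [j [_ ->]]]|[[i ->]|[t [_ [_ ->]]]]].
    * exact: (gen_conj H n0 l k' j ldvd).
    * exact: (gen_eii n0 l i).
    * by apply: (gen_upow n0 l); apply: dvdn_mulr.
  + lia.
Qed.
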